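(* Let $f$ be a real function infinitely differentiable on a neighborhood of $0$, and write $c_k^f=f^{(k)}(0)$. For $n,k\in\mathbb{N}_0$ define \[ b_{n,k}=\frac{1}{k!}\sum_{i=0}^{k}(-1)^i\binom{k}{i}(k-i)^{\llbracket n\rrbracket},\qquad a_n=\frac{1}{n!}\sum_{k=0}^{n}c_k^f\,b_{n,k}. \] Then the function $\mathcal{A}^{f,D_3}(x)=\sum_{n=0}^{\infty}a_n[\ln(x+1)]^n$ matches all derivatives of $f$ at $0$; precisely, for every $N\in\mathbb{N}_0$, the function $x\mapsto\sum_{n=0}^{N}a_n[\ln(x+1)]^n$ satisfies \[ \frac{d^m}{dx^m}\Big[\sum_{n=0}^{N}a_n[\ln(x+1)]^n\Big]_{x=0}=f^{(m)}(0)\qquad\text{for all }0\le m\le N . \]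
   Context: The generalized exponentiation is defined by $x^{\llbracket y\rrbracket}=1$ if $x=y=0$, and $x^{\llbracket y\rrbracket}=x^y$ otherwise; with this convention $b_{n,k}$ are the Stirling numbers of the second kind, including $b_{0,0}=1$ and $b_{n,0}=0$ for $n>0$. *)

(* Defs.v *)
From Stdlib Require Import Reals.
From Coquelicot Require Import Coquelicot.
Open Scope R_scope.

Definition gpow (x : R) (y : nat) : R :=
  if Req_EM_T x 0 then (if Nat.eqb y 0 then 1 else x ^ y) else x ^ y.

Definition bnk (n k : nat) : R :=
  / INR (Factorial.fact k) *
  sum_f_R0 (fun i => (-1) ^ i * Binomial.C k i * gpow (INR (k - i)) n) k.

Definition cf (f : R -> R) (k : nat) : R := Derive_n f k 0.

Definition an (f : R -> R) (n : nat) : R :=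
  / INR (Factorial.fact n) * sum_f_R0 (fun k => cf f k * bnk n k) n.

Definition partialA (f : R -> R) (N : nat) (x : R) : R :=
  sum_f_R0 (fun n => an f n * (ln (x + 1)) ^ n) N.

(* Main.v *)
Require Import Defs.
From Stdlib Require Import Reals.
From Coquelicot Require Import Coquelicot.
Open Scope R_scope.
From Stdlib Require Import Lra Lia.

Definition OpenP (U : R -> Prop) := forall x, U x -> locally x U.
Definition Smk (U : R -> Prop) k h := forall k', (k' <= k)%nat -> forall x, U x -> ex_derive_n h k' x.

Lemma Dn_Derive f k x : Derive_n (Derive f) k x = Derive_n f (S k) x.
Proof.
  rewrite <- (Nat.add_1_r k). rewrite <- Derive_n_comp. reflexivity.
Qed.

Lemma exdn_S f k x : ex_derive f x -> ex_derive_n (Derive f) k x -> ex_derive_n f (S k) x.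
Proof.
  intros H1 H2. destruct k. exact H1.
  simpl in H2 |- *. eapply ex_derive_ext; [|exact H2]. intro t. apply Dn_Derive.
Qed.

Lemma exdn_D f k x : ex_derive_n f (S k) x -> ex_derive_n (Derive f) k x.
Proof.
  intros H. destruct k. exact I.
  simpl in H |- *. eapply ex_derive_ext; [|exact H]. intro t. symmetry; apply Dn_Derive.
Qed.

Lemma loc_eq U (HU : OpenP U) (h g : R -> R) x : U x -> (forall y, U y -> h y = g y) ->
  locally x (fun t => h t = g t).
Proof. intros Hx H. eapply filter_imp; [|exact (HU x Hx)]. exact H. Qed.

Lemma loc_Smk U (HU : OpenP U) k h x : U x -> Smk U k h ->
  locally x (fun y => forall k', (k' <= k)%nat -> ex_derive_n h k' y).
Proof. intros Hx H. eapply filter_imp; [|exact (HU x Hx)]. intros y Hy k' Hk. now apply H. Qed.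

Lemma Smk_ext U (HU : OpenP U) k h g : (forall y, U y -> h y = g y) -> Smk U k h -> Smk U k g.
Proof.
  intros E H k' Hk x Hx. eapply ex_derive_n_ext_loc. apply (loc_eq U HU); eauto. now apply H.
Qed.

Lemma Smk_plus U (HU : OpenP U) k h g : Smk U k h -> Smk U k g -> Smk U k (fun x => h x + g x).
Proof.
  intros H G k' Hk x Hx. apply ex_derive_n_plus.
  - eapply filter_imp; [|exact (HU x Hx)]. intros y Hy k'' Hk''. apply H; auto; lia.
  - eapply filter_imp; [|exact (HU x Hx)]. intros y Hy k'' Hk''. apply G; auto; lia.
Qed.

Lemma Smk_scal U k a h : Smk U k h -> Smk U k (fun x => a * h x).
Proof. intros H k' Hk x Hx. apply ex_derive_n_scal_l. now apply H. Qed.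

Lemma Smk_le U k k2 h : (k2 <= k)%nat -> Smk U k h -> Smk U k2 h.
Proof. intros Hk H k' Hk' x Hx. apply H; auto; lia. Qed.

Lemma Smk_S1 U k h : Smk U (S k) h -> forall x, U x -> ex_derive h x.
Proof. intros H x Hx. exact (H 1%nat ltac:(lia) x Hx). Qed.

Lemma Smk_SD U k h : Smk U (S k) h -> Smk U k (Derive h).
Proof. intros H k' Hk x Hx. apply exdn_D. apply H; auto; lia. Qed.

Lemma Smk_Sintro U k h : (forall x, U x -> ex_derive h x) -> Smk U k (Derive h) -> Smk U (S k) h.
Proof.
  intros H1 H2 k' Hk x Hx. destruct k'. exact I. apply exdn_S; auto. apply H2; auto; lia.
Qed.

Lemma Smk_0 U h : Smk U 0 h.
Proof. intros k' Hk x Hx. replace k' with 0%nat by lia. exact I. Qed.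

Lemma Smk_mult U (HU : OpenP U) k : forall u v, Smk U k u -> Smk U k v -> Smk U k (fun x => u x * v x).
Proof.
  induction k; intros u v Hu Hv. apply Smk_0.
  apply Smk_Sintro.
  - intros x Hx. apply ex_derive_mult; eapply Smk_S1; eauto.
  - apply Smk_ext with (h := fun x => Derive u x * v x + u x * Derive v x); auto.
    + intros y Hy. rewrite Derive_mult; auto; eapply Smk_S1; eauto.
    + apply Smk_plus; auto.
      * apply IHk. apply Smk_SD; exact Hu. apply (Smk_le U (S k)); [lia|exact Hv].
      * apply IHk. apply (Smk_le U (S k)); [lia|exact Hu]. apply Smk_SD; exact Hv.
Qed.

Lemma Smk_const U k c : Smk U k (fun _ => c).
Proof.
  intros k' Hk x Hx. destruct k'. exact I. simpl. destruct k'.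
  - apply ex_derive_const.
  - apply ex_derive_ext with (f := fun _ => 0).
    + intro t. rewrite Derive_n_const. reflexivity.
    + apply ex_derive_const.
Qed.

Definition Sm (U : R -> Prop) h := forall k x, U x -> ex_derive_n h k x.
Definition theta (g : R -> R) (x : R) := (1 + x) * Derive g x.

Lemma isd_Dn g k x : ex_derive_n g (S k) x -> is_derive (Derive_n g k) x (Derive_n g (S k) x).
Proof. intros H. apply Derive_correct. exact H. Qed.

Lemma isd_G g m x : ex_derive_n g (S m) x -> ex_derive_n g (S (S m)) x ->
  is_derive (fun y => (1 + y) * Derive_n g (S m) y + INR m * Derive_n g m y) x
    ((1+x) * Derive_n g (S (S m)) x + INR (S m) * Derive_n g (S m) x).
Proof.
  intros H1 H2.
  apply isd_Dn in H1. apply isd_Dn in H2.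
  evar (l : R). replace ((1+x) * Derive_n g (S (S m)) x + INR (S m) * Derive_n g (S m) x) with l.
  - apply (@is_derive_plus R_AbsRing).
    + apply (@is_derive_mult R_AbsRing). 2: exact H2.
      apply (@is_derive_plus R_AbsRing). apply is_derive_const. apply is_derive_id.
      intros; apply Rmult_comm.
    + apply is_derive_scal. exact H1.
  - unfold l. rewrite S_INR. simpl. unfold plus, mult, scal, one, zero; simpl.
    unfold mult; simpl. generalize (Derive (Derive_n g m) x) (Derive (fun x0 : R => Derive (Derive_n g m) x0) x) (INR m). intros a b c. generalize (x : R). intros y. ring.
Qed.

Lemma Dn_theta U (HU : OpenP U) g : Sm U g -> forall m x, U x ->
  Derive_n (theta g) m x = (1+x) * Derive_n g (S m) x + INR m * Derive_n g m x.
Proof.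
  intros Hg m. induction m; intros x Hx.
  - simpl. unfold theta. rewrite Rmult_0_l, Rplus_0_r. reflexivity.
  - simpl Derive_n at 1.
    rewrite (Derive_ext_loc _ (fun y => (1 + y) * Derive_n g (S m) y + INR m * Derive_n g m y)).
    + apply is_derive_unique. apply isd_G; apply Hg; auto.
    + apply (loc_eq U HU); auto.
Qed.

Lemma Sm_theta U (HU : OpenP U) g : Sm U g -> Sm U (theta g).
Proof.
  intros Hg k x Hx. destruct k. exact I. simpl.
  eapply ex_derive_ext_loc.
  - apply (loc_eq U HU (fun y => (1 + y) * Derive_n g (S k) y + INR k * Derive_n g k y)); auto.
    intros y Hy. symmetry. apply (Dn_theta U HU g Hg k y Hy).
  - eexists. apply isd_G; apply Hg; auto.
Qed.

Fixpoint thetan (j : nat) (h : R -> R) : R -> R :=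
  match j with O => h | S j => theta (thetan j h) end.

Lemma Sm_thetan U (HU : OpenP U) h j : Sm U h -> Sm U (thetan j h).
Proof. intros H; induction j; simpl; auto. apply Sm_theta; auto. Qed.

Lemma E_rec U (HU : OpenP U) h (H0 : U 0) (Hh : Sm U h) j m :
  Derive_n (thetan (S j) h) m 0 = Derive_n (thetan j h) (S m) 0 + INR m * Derive_n (thetan j h) m 0.
Proof.
  simpl thetan. rewrite (Dn_theta U HU); auto. ring. apply Sm_thetan; auto.
Qed.

Lemma inversion (P F : R -> R) U V (HU : OpenP U) (HV : OpenP V) (HU0 : U 0) (HV0 : V 0)
  (HP : Sm U P) (HF : Sm V F) N :
  (forall j, (j <= N)%nat -> thetan j P 0 = thetan j F 0) ->
  forall m, (m <= N)%nat -> Derive_n P m 0 = Derive_n F m 0.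
Proof.
  intros H.
  assert (forall m j, (j + m <= N)%nat -> Derive_n (thetan j P) m 0 = Derive_n (thetan j F) m 0).
  { induction m; intros j Hj.
    - simpl. apply H. lia.
    - assert (E1 := E_rec U HU P HU0 HP j m). assert (E2 := E_rec V HV F HV0 HF j m).
      assert (A1 := IHm (S j) ltac:(lia)). assert (A2 := IHm j ltac:(lia)). rewrite A2 in E1. rewrite A1 in E1. lra. }
  intros m Hm. exact (H0 m 0%nat ltac:(lia)).
Qed.

Definition U1 (x : R) := -1 < x.
Lemma OpenU1 : OpenP U1.
Proof. intros x Hx. apply (open_gt (-1)). exact Hx. Qed.

Definition polyL (c : nat -> R) (M : nat) (x : R) : R :=
  sum_f_R0 (fun n => c n * (ln (x + 1)) ^ n) M.

Lemma isd_L x : U1 x -> is_derive (fun y => ln (y + 1)) x (/ (x + 1)).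
Proof.
  intros Hx. unfold U1 in Hx. auto_derive. lra. field. lra.
Qed.

Lemma isd_w x : U1 x -> is_derive (fun y => / (y + 1)) x (-1 * (/ (x+1) * / (x+1))).
Proof.
  intros Hx. unfold U1 in Hx. auto_derive. lra. field. lra.
Qed.

Lemma Smk_w k : Smk U1 k (fun y => / (y + 1)).
Proof.
  induction k. apply Smk_0.
  apply Smk_Sintro.
  - intros x Hx. eexists. apply isd_w; auto.
  - apply Smk_ext with (h := fun x => -1 * (/ (x+1) * / (x+1))). exact OpenU1.
    + intros y Hy. symmetry. apply is_derive_unique. apply isd_w; auto.
    + apply Smk_scal. apply (Smk_mult U1 OpenU1 k (fun y => / (y + 1)) (fun y => / (y + 1))); auto.
Qed.

Lemma Smk_L k : Smk U1 k (fun y => ln (y + 1)).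
Proof.
  destruct k. apply Smk_0.
  apply Smk_Sintro.
  - intros x Hx. eexists. apply isd_L; auto.
  - apply Smk_ext with (h := fun x => / (x+1)). exact OpenU1.
    + intros y Hy. symmetry. apply is_derive_unique. apply isd_L; auto.
    + apply Smk_w.
Qed.

Lemma Smk_Lpow k n : Smk U1 k (fun y => ln (y + 1) ^ n).
Proof.
  induction n. simpl. apply Smk_const.
  simpl. apply (Smk_mult U1 OpenU1 k (fun y => ln (y + 1)) (fun y => ln (y + 1) ^ n)); auto.
  apply Smk_L.
Qed.

Lemma Sm_polyL c M : Sm U1 (polyL c M).
Proof.
  intros k x Hx. cut (Smk U1 k (polyL c M)). { intros H; exact (H k (le_n k) x Hx). }
  unfold polyL. induction M.
  - exact (Smk_scal U1 k (c 0%nat) _ (Smk_Lpow k 0)).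
  - exact (Smk_plus U1 OpenU1 k _ _ IHM (Smk_scal U1 k (c (S M)) _ (Smk_Lpow k (S M)))).
Qed.

Definition shift (c : nat -> R) (n : nat) := INR (S n) * c (S n).

Lemma isd_polyL c M x : U1 x ->
  is_derive (polyL c (S M)) x (polyL (shift c) M x / (x + 1)).
Proof.
  intros Hx. assert (Hx' : x + 1 <> 0) by (unfold U1 in Hx; lra).
  assert (Hm : forall n, is_derive (fun y => c (S n) * ln (y + 1) ^ (S n)) x
                  (shift c n * ln (x + 1) ^ n / (x + 1))).
  { intros n. evar (l : R). replace (shift c n * ln (x + 1) ^ n / (x + 1)) with l.
    apply is_derive_scal. apply is_derive_pow. apply isd_L. auto.
    unfold l, shift. simpl pred. field. auto. }
  unfold polyL. induction M.
  - simpl. evar (l : R). replace (shift c 0 * 1 / (x + 1)) with l.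
    apply (@is_derive_plus R_AbsRing).
    apply (is_derive_ext (fun _ => c 0%nat)). intro t. simpl. ring.
    apply is_derive_const.
    specialize (Hm 0%nat). simpl pow in Hm. exact Hm.
    unfold l. simpl. unfold plus, zero; simpl. ring.
  - replace (sum_f_R0 (fun n : nat => shift c n * ln (x + 1) ^ n) (S M) / (x + 1))
      with (plus (sum_f_R0 (fun n : nat => shift c n * ln (x + 1) ^ n) M / (x + 1))
                 (shift c (S M) * ln (x + 1) ^ (S M) / (x + 1))).
    apply (is_derive_ext (fun y => plus (sum_f_R0 (fun n : nat => c n * ln (y + 1) ^ n) (S M))
                                       (c (S (S M)) * ln (y + 1) ^ (S (S M))))).
    intro t. reflexivity.
    apply (@is_derive_plus R_AbsRing). exact IHM. apply Hm.
    simpl. unfold plus; simpl. field. auto.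
Qed.

Lemma theta_polyL c M x : U1 x -> theta (polyL c (S M)) x = polyL (shift c) M x.
Proof.
  intros Hx. unfold theta. rewrite (is_derive_unique _ _ _ (isd_polyL c M x Hx)).
  field. unfold U1 in Hx; lra.
Qed.

Lemma thetan_P c N j : (j <= N)%nat -> forall x, U1 x ->
  thetan j (polyL c N) x = polyL (Nat.iter j shift c) (N - j) x.
Proof.
  induction j; intros Hj x Hx.
  - simpl. rewrite Nat.sub_0_r. reflexivity.
  - simpl thetan. unfold theta.
    rewrite (Derive_ext_loc _ (polyL (Nat.iter j shift c) (S (N - S j)))).
    + change (Nat.iter (S j) shift c) with (shift (Nat.iter j shift c)). apply (theta_polyL _ _ x Hx).
    + apply (loc_eq U1 OpenU1); auto. intros y Hy. rewrite IHj; auto. 2: lia.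
      f_equal. lia.
Qed.

Lemma polyL_0 c M : polyL c M 0 = c 0%nat.
Proof.
  unfold polyL. rewrite Rplus_0_l, ln_1. induction M; simpl. ring.
  rewrite IHM. ring.
Qed.

Lemma iter_shift c j n : Nat.iter j shift c n = INR (Factorial.fact (n + j)) / INR (Factorial.fact n) * c (n + j)%nat.
Proof.
  revert n. induction j; intros n.
  - simpl. rewrite Nat.add_0_r. field. apply INR_fact_neq_0.
  - simpl Nat.iter. unfold shift at 1. rewrite IHj.
    replace (S n + j)%nat with (n + S j)%nat by lia.
    change (Factorial.fact (S n)) with (S n * Factorial.fact n)%nat. rewrite mult_INR. field. split; [apply INR_fact_neq_0|].
    apply not_0_INR. lia.
Qed.

Lemma thetan_P0 c N j : (j <= N)%nat -> thetan j (polyL c N) 0 = INR (Factorial.fact j) * c j.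
Proof.
  intros Hj. rewrite thetan_P; [|auto|unfold U1; lra].
  rewrite polyL_0, iter_shift. simpl. field.
Qed.

Lemma gpow_0 x : gpow x 0 = 1.
Proof. unfold gpow. destruct (Req_EM_T x 0); reflexivity. Qed.

Lemma gpow_S x n : gpow x (S n) = x * gpow x n.
Proof.
  unfold gpow. destruct (Req_EM_T x 0) as [e|e].
  - simpl. subst. ring.
  - reflexivity.
Qed.

Definition Asum n k := sum_f_R0 (fun i => (-1) ^ i * Binomial.C k i * gpow (INR (k - i)) n) k.

Lemma bnk_A n k : bnk n k = / INR (Factorial.fact k) * Asum n k.
Proof. reflexivity. Qed.

Lemma C_S i k : (i <= k)%nat -> INR (S i) * Binomial.C (S k) (S i) = INR (S k) * Binomial.C k i.
Proof.
  intros H. unfold Binomial.C. simpl minus.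
  change (Factorial.fact (S k)) with (S k * Factorial.fact k)%nat.
  change (Factorial.fact (S i)) with (S i * Factorial.fact i)%nat.
  rewrite !mult_INR. replace (S k - S i)%nat with (k - i)%nat by lia. field.
  repeat split; try apply INR_fact_neq_0; apply not_0_INR; lia.
Qed.

Lemma A_rec n k : Asum (S n) (S k) = INR (S k) * Asum n (S k) + INR (S k) * Asum n k.
Proof.
  unfold Asum.
  rewrite (sum_eq _ (fun i => ((-1) ^ i * Binomial.C (S k) i * gpow (INR (S k - i)) n) * INR (S k)
                             - (-1) ^ i * (INR i * Binomial.C (S k) i) * gpow (INR (S k - i)) n)).
  2:{ intros i Hi. rewrite gpow_S. rewrite minus_INR by exact Hi. ring. }
  rewrite minus_sum.
  rewrite <- scal_sum.
  rewrite (decomp_sum (fun i => (-1) ^ i * (INR i * Binomial.C (S k) i) * gpow (INR (S k - i)) n)) by lia.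
  simpl pred.
  rewrite (sum_eq (fun i => (-1) ^ S i * (INR (S i) * Binomial.C (S k) (S i)) * gpow (INR (S k - S i)) n)
              (fun i => ((-1) ^ i * Binomial.C k i * gpow (INR (k - i)) n) * (- INR (S k)))).
  2:{ intros i Hi. rewrite C_S by exact Hi. replace (S k - S i)%nat with (k - i)%nat by lia. simpl pow. ring. }
  rewrite <- scal_sum. simpl INR at 3. ring.
Qed.

Lemma A_S0 n : Asum (S n) 0 = 0.
Proof. unfold Asum. simpl sum_f_R0. rewrite gpow_S. simpl. ring. Qed.

Lemma A_0 k : Asum 0 (S k) = 0.
Proof.
  unfold Asum.
  rewrite (sum_eq _ (fun i => Binomial.C (S k) i * (-1) ^ i * 1 ^ (S k - i))).
  - rewrite <- binomial. replace (-1 + 1) with 0 by ring. simpl. ring.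
  - intros i Hi. rewrite gpow_0, pow1. ring.
Qed.

Lemma bnk_rec n k : bnk (S n) (S k) = INR (S k) * bnk n (S k) + bnk n k.
Proof.
  rewrite !bnk_A, A_rec.
  change (Factorial.fact (S k)) with (S k * Factorial.fact k)%nat. rewrite mult_INR.
  field. split; [apply INR_fact_neq_0|]. apply not_0_INR; lia.
Qed.

Lemma bnk_S0 n : bnk (S n) 0 = 0.
Proof. rewrite bnk_A, A_S0. ring. Qed.

Lemma bnk_00 : bnk 0 0 = 1.
Proof. rewrite bnk_A. unfold Asum. simpl. rewrite gpow_0. unfold Binomial.C. simpl. field. Qed.

Lemma bnk_big n : forall k, (n < k)%nat -> bnk n k = 0.
Proof.
  induction n; intros k Hk.
  - destruct k. lia. rewrite bnk_A, A_0. ring.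
  - destruct k. lia. rewrite bnk_rec, IHn, IHn by lia. ring.
Qed.

Lemma isd_sum (g : nat -> R -> R) (dg : nat -> R) j x :
  (forall k, (k <= j)%nat -> is_derive (g k) x (dg k)) ->
  is_derive (fun y => sum_f_R0 (fun k => g k y) j) x (sum_f_R0 dg j).
Proof.
  induction j; intros H.
  - simpl. apply H. lia.
  - simpl. apply (@is_derive_plus R_AbsRing).
    + apply IHj. intros; apply H; lia.
    + apply H. lia.
Qed.

Lemma sum_shift (a : nat -> R) j : a 0%nat = 0 -> a (S j) = 0 ->
  sum_f_R0 a j = sum_f_R0 (fun k => a (S k)) j.
Proof.
  intros H0 H1.
  assert (E := decomp_sum a (S j) ltac:(lia)). rewrite tech5 in E. simpl pred in E. lra.
Qed.

Definition Ff (f : R -> R) j x := sum_f_R0 (fun k => bnk j k * (1 + x) ^ k * Derive_n f k x) j.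

Lemma isd_term f b k x : ex_derive_n f (S k) x ->
  is_derive (fun y => b * (1 + y) ^ k * Derive_n f k y) x
    (b * (INR k * (1 + x) ^ pred k) * Derive_n f k x + b * (1 + x) ^ k * Derive_n f (S k) x).
Proof.
  intros H. apply isd_Dn in H.
  assert (Hp : is_derive (fun y => (1 + y) ^ k) x (INR k * (1 + x) ^ pred k)).
  { auto_derive. auto. ring. }
  assert (Hb : is_derive (fun y => b * (1 + y) ^ k) x (b * (INR k * (1 + x) ^ pred k))).
  { apply is_derive_scal. exact Hp. }
  assert (Hm := @is_derive_mult R_AbsRing _ _ x _ _ Hb H ltac:(intros; apply Rmult_comm)).
  simpl in Hm. unfold plus, mult in Hm; simpl in Hm. unfold mult in Hm; simpl in Hm.
  exact Hm.
Qed.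


Lemma theta_Ff (f : R -> R) (V : R -> Prop) (HV : OpenP V) (Hf : Sm V f) j x : V x -> theta (Ff f j) x = Ff f (S j) x.
Proof.
  intros Hx. unfold theta.
  assert (Hd : is_derive (Ff f j) x _) by exact (isd_sum (fun k y => bnk j k * (1 + y) ^ k * Derive_n f k y) _ j x
     (fun k _ => isd_term f (bnk j k) k x (Hf (S k) x Hx))).
  rewrite (is_derive_unique _ _ _ Hd).
  rewrite scal_sum.
  rewrite (sum_eq _ (fun k => INR k * bnk j k * (1 + x) ^ k * Derive_n f k x
                             + bnk j k * (1 + x) ^ S k * Derive_n f (S k) x)).
  2:{ intros k _. destruct k; simpl pred; simpl pow; simpl INR; ring. }
  rewrite plus_sum.
  rewrite (sum_shift (fun k => INR k * bnk j k * (1 + x) ^ k * Derive_n f k x)).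
  2: simpl; ring.
  2: rewrite bnk_big by lia; ring.
  unfold Ff. rewrite (decomp_sum _ (S j)) by lia. simpl pred. rewrite bnk_S0.
  rewrite <- plus_sum. rewrite Rmult_0_l, Rmult_0_l, Rplus_0_l.
  apply sum_eq. intros k _. rewrite bnk_rec. ring.
Qed.

Lemma thetan_Ff (f : R -> R) (V : R -> Prop) (HV : OpenP V) (Hf : Sm V f) j x : V x -> thetan j f x = Ff f j x.
Proof.
  revert x. induction j; intros x Hx.
  - unfold Ff. simpl. rewrite bnk_00. ring.
  - simpl thetan. rewrite <- (theta_Ff f V HV Hf) by exact Hx. unfold theta. f_equal.
    apply Derive_ext_loc. apply (loc_eq V HV); auto.
Qed.

Theorem proposition4 (f : R -> R)
  (Hsmooth : exists eps : R, 0 < eps /\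
     forall (k : nat) (x : R), Rabs x < eps -> ex_derive_n f k x) :
  forall N m : nat, (m <= N)%nat ->
    Derive_n (partialA f N) m 0 = Derive_n f m 0.
Proof.
  destruct Hsmooth as [eps [He Hf]]. intros N m Hm.
  set (V := fun x => -eps < x /\ x < eps).
  assert (HV : OpenP V).
  { intros x Hx. apply (open_and (fun x => -eps < x) (fun x => x < eps)); auto.
    apply open_gt. apply open_lt. }
  assert (HfV : Sm V f).
  { intros k x [H1 H2]. apply Hf. apply Rabs_def1; auto. }
  assert (HP : Sm U1 (partialA f N)) by exact (Sm_polyL (an f) N).
  apply (inversion (partialA f N) f U1 V OpenU1 HV) with N; auto.
  - unfold U1; lra.
  - unfold V; lra.
  - intros j Hj.
    change (partialA f N) with (polyL (an f) N).
    rewrite thetan_P0 by exact Hj.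
    rewrite (thetan_Ff f V HV HfV j 0) by (unfold V; lra).
    unfold an, Ff, cf. field_simplify. 2: apply INR_fact_neq_0.
    apply sum_eq. intros k _. rewrite Rplus_0_r, pow1. ring.
Qed.
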